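(* Let $p\ge3$ be odd and $\Gamma(v,x)=x^p-pxv^{p-1}+(p-1)v^p$ for $v\in[0,1]$, $x\in[-1,1]$. If $x,y,z\in[-1,1]$ are such that the matrix $\begin{pmatrix}x&z\\ z&y\end{pmatrix}$ is positive semi-definite, then for every $v\in[0,1]$, $$\Gamma(v,x)+\Gamma(v,y)+2\Gamma(v,z)\ge0.$$ *)

(* Defs.v *)
From Stdlib Require Import Reals.
Open Scope R_scope.

Definition Gamma (p : nat) (v x : R) : R :=
  x ^ p - INR p * x * v ^ (p - 1) + (INR p - 1) * v ^ p.

(* The symmetric matrix [[x, z], [z, y]] is positive semi-definite:
   (a b) M (a b)^T >= 0 for all real a, b. *)
Definition psd2 (x y z : R) : Prop :=
  forall a b : R, a * (x * a + z * b) + b * (z * a + y * b) >= 0.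

(* Main.v *)
Require Import Defs.
From Stdlib Require Import Reals Arith Lra Lia Psatz.
Open Scope R_scope.

Lemma G_nonneg (n : nat) (v x : R) : 0 <= v -> 0 <= x ->
  0 <= x ^ (S n) - INR (S n) * x * v ^ n + INR n * v ^ (S n).
Proof.
  intros hv hx. induction n as [|n IH].
  - simpl. lra.
  - assert (h : x ^ S (S n) - INR (S (S n)) * x * v ^ S n + INR (S n) * v ^ S (S n)
      - x * (x ^ S n - INR (S n) * x * v ^ n + INR n * v ^ S n)
      = INR (S n) * v ^ n * (x - v) ^ 2).
    { rewrite !S_INR. simpl. ring. }
    assert (0 <= INR (S n) * v ^ n * (x - v) ^ 2).
    { apply Rmult_le_pos; [apply Rmult_le_pos; [apply pos_INR|apply pow_le; lra]|].
      apply pow2_ge_0. }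
    assert (0 <= x * (x ^ S n - INR (S n) * x * v ^ n + INR n * v ^ S n))
      by (apply Rmult_le_pos; lra).
    lra.
Qed.

Theorem mainTheorem16 (p : nat) (hp3 : (3 <= p)%nat) (hodd : Nat.Odd p)
  (x y z : R)
  (hx : -1 <= x <= 1) (hy : -1 <= y <= 1) (hz : -1 <= z <= 1)
  (hpsd : psd2 x y z) :
  forall v : R, 0 <= v <= 1 ->
    Gamma p v x + Gamma p v y + 2 * Gamma p v z >= 0.
Proof.
  intros v hv.
  assert (x0 : 0 <= x) by (specialize (hpsd 1 0); lra).
  assert (y0 : 0 <= y) by (specialize (hpsd 0 1); lra).
  assert (xyz : x + y + 2 * z >= 0) by (specialize (hpsd 1 1); lra).
  destruct p as [|q]; [lia|].
  unfold Gamma. replace (S q - 1)%nat with q by lia.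
  replace (INR (S q) - 1) with (INR q) by (rewrite S_INR; ring).
  assert (hq : 2 <= INR q) by (replace 2 with (INR 2) by (simpl; lra); apply le_INR; lia).
  pose proof (G_nonneg q v x (proj1 hv) x0) as Gx.
  pose proof (G_nonneg q v y (proj1 hv) y0) as Gy.
  destruct (Rle_or_lt 0 z) as [z0|z0].
  - pose proof (G_nonneg q v z (proj1 hv) z0). lra.
  - set (t := - z).
    assert (t0 : 0 <= t) by (unfold t; lra).
    assert (hzp : z ^ S q = - t ^ S q).
    { destruct hodd as [k hk]. unfold t. rewrite hk.
      replace (- z) with ((-1) * z) by ring. rewrite Rpow_mult_distr.
      replace (2 * k + 1)%nat with (S (2 * k)) by lia. rewrite pow_1_odd. ring. }
    rewrite hzp. replace z with (- t) by (unfold t; ring).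
    assert (PS : forall a : R, a ^ S q = a * a ^ q) by (intro; reflexivity).
    rewrite !PS, !S_INR. rewrite !PS in Gx, Gy. rewrite !S_INR in Gx, Gy.
    assert (V0 : 0 <= v ^ q) by (apply pow_le; lra).
    assert (T0 : 0 <= t ^ q) by (apply pow_le; lra).
    destruct (Rle_or_lt t v) as [tv|tv].
    + assert (T : t ^ q <= v ^ q) by (apply pow_incr; lra).
      assert (0 <= t * (v ^ q - t ^ q)) by (apply Rmult_le_pos; lra).
      assert (0 <= v * v ^ q) by (apply Rmult_le_pos; lra).
      assert (0 <= t * v ^ q) by (apply Rmult_le_pos; lra).
      nra.
    + assert (T : v ^ q <= t ^ q) by (apply pow_incr; lra).
      pose proof (G_nonneg q t x t0 x0) as Hx.
      pose proof (G_nonneg q t y t0 y0) as Hy.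
      rewrite !PS, !S_INR in Hx, Hy.
      assert (0 <= (x + y - 2 * t) * (t ^ q - v ^ q)).
      { apply Rmult_le_pos; unfold t in *; lra. }
      assert (0 <= v * v ^ q) by (apply Rmult_le_pos; lra).
      nra.
Qed.
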